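(* Let $t\ge 3$ be an integer, let $G$ be a graph not containing $K_{3,t}$ as a subgraph, and let $\nabla$ be an integer with $\nabla>\nabla_1^B(G)$. Define $D_1=\{v\in V(G):$ for all $A\subseteq V(G)\setminus\{v\}$ with $N(v)\subseteq N[A]$ we have $|A|>2\nabla-1\}$, $R_1=V(G)\setminus N[D_1]$, $N_{R_1}(v)=N(v)\cap R_1$, $B_v=\{z\in V(G)\setminus\{v\}: |N_{R_1}(v)\cap N_{R_1}(z)|\ge(2\nabla-1)t+1\}$ for $v\in V(G)$, $W=\{v\in V(G): B_v\neq\emptyset\}$, $D_2=\bigcup_{v\in W}(\{v\}\cup B_v)$, and $R=V(G)\setminus N[D_1\cup D_2]$. Then for every $v\in V(G)$ we have $|N(v)\cap R|\le(2\nabla-1)^2t+(2\nabla-1)$.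
   Context: Graphs are finite, undirected and simple. $N(v)$ is the open neighbourhood of $v$, $N[v]=N(v)\cup\{v\}$, $N[A]=\bigcup_{a\in A}N[a]$. A $1$-shallow minor of $G$ is a graph obtained from $G$ by deleting vertices and edges and contracting pairwise vertex-disjoint connected subgraphs of radius at most $1$; $\nabla_1^B(G)$ is the maximum edge density $|E(H)|/|V(H)|$ of a bipartite $1$-shallow minor $H$ of $G$. $K_{3,t}$ is the complete bipartite graph with parts of sizes $3$ and $t$. *)

(* Defs.v *)
(* A finite simple graph = (T : finType, e : rel T) with e
   symmetric and irreflexive. *)
From mathcomp Require Import all_boot all_order.
Set Implicit Arguments. Unset Strict Implicit. Unset Printing Implicit Defensive.

Section Graph.
Variables (T : finType) (e : rel T).

Definition nbh (v : T) : {set T} := [set u | e v u].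
Definition cnbhs (A : {set T}) : {set T} :=
  [set u | [exists a in A, (u == a) || e a u]].

Definition has_K3t (t : nat) : Prop :=
  exists (X Y : {set T}), [/\ #|X| = 3, #|Y| = t, [disjoint X & Y] &
    forall x y, x \in X -> y \in Y -> e x y].

Definition nedges k (h : rel 'I_k) : nat :=
  #|[set p : 'I_k * 'I_k | (p.1 < p.2)%N && h p.1 p.2]|.

Definition bipartite k (h : rel 'I_k) : Prop :=
  exists f : 'I_k -> bool, forall i j, h i j -> f i != f j.

(* H (simple graph on 'I_k) is a 1-shallow minor of G, witnessed by
   pairwise disjoint branch sets S i, each containing a centre c i with
   S i \subset N[c i] (i.e. connected of radius <= 1), such that every edge
   of H is realised by an edge of G between the branch sets. *)
Definition shallow1_minor k (h : rel 'I_k) : Prop :=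
  exists (S : 'I_k -> {set T}) (c : 'I_k -> T),
    [/\ forall i, c i \in S i,
        forall i, S i \subset cnbhs [set c i],
        forall i j, i != j -> [disjoint S i & S j] &
        forall i j, h i j -> exists x y, [/\ x \in S i, y \in S j & e x y]].

(* nab > \nabla_1^B(G): every nonempty bipartite 1-shallow minor H has
   |E(H)| / |V(H)| < nab (the max over the finitely many H is < nab). *)
Definition nabla1B_lt (nab : nat) : Prop :=
  forall k (h : rel 'I_k), symmetric h -> irreflexive h ->
    (0 < k)%N -> bipartite h -> shallow1_minor h -> (nedges h < nab * k)%N.

Variables (t nab : nat).
Definition bnd : nat := 2 * nab - 1.

Definition D1 : {set T} :=
  [set v | [forall A : {set T}, (v \notin A) && (nbh v \subset cnbhs A) ==>
                                 (bnd < #|A|)%N]].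
Definition R1 : {set T} := ~: cnbhs D1.
Definition NR1 (v : T) : {set T} := nbh v :&: R1.
Definition Bv (v : T) : {set T} :=
  [set z | (z != v) && (bnd * t + 1 <= #|NR1 v :&: NR1 z|)%N].
Definition W : {set T} := [set v | Bv v != set0].
Definition D2 : {set T} := \bigcup_(v in W) (v |: Bv v).
Definition Rset : {set T} := ~: cnbhs (D1 :|: D2).

End Graph.

(* Main.v *)
Require Import Defs.
From mathcomp Require Import all_boot all_order.

Lemma card_bigcup_le (T : finType) (A : {set T}) (F : T -> {set T}) :
  (#|\bigcup_(a in A) F a| <= \sum_(a in A) #|F a|)%N.
Proof.
elim/big_rec2: _ => [|i x y _ H]; first by rewrite cards0.
apply: (leq_trans (leq_card_setU _ _)); by rewrite leq_add2l.
Qed.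

Theorem lemma35 (T : finType) (e : rel T) (t nab : nat) :
  symmetric e -> irreflexive e -> (3 <= t)%N -> ~ has_K3t e t ->
  nabla1B_lt e nab ->
  forall v : T,
    (#|nbh e v :&: Rset e t nab| <= bnd nab ^ 2 * t + bnd nab)%N.
Proof.
move=> esym eirr _ _ _ v.
set b := bnd nab.
have inR : forall a y, a \in D1 e nab :|: D2 e t nab -> e a y -> y \notin Rset e t nab.
  move=> a y Ha Hay; rewrite /Rset inE negbK inE; apply/existsP; exists a.
  by rewrite Ha Hay orbT.
have RR1 : forall y, y \in Rset e t nab -> y \in R1 e nab.
  move=> y; rewrite /Rset /R1 !inE; apply: contra => /existsP[a /andP[Ha Hy]].
  by apply/existsP; exists a; rewrite inE Ha.
case: (boolP (v \in D1 e nab)) => HvD.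
  rewrite (_ : _ :&: _ = set0) ?cards0 //; apply/eqP; rewrite -subset0.
  apply/subsetP => y; rewrite inE => /andP[Hvy Hy]; rewrite inE in Hvy.
  by move: (inR v y); rewrite inE HvD Hvy Hy => /(_ erefl erefl).
move: HvD; rewrite inE negb_forall => /existsP[A].
rewrite negb_imply => /andP[/andP[vA sub]]; rewrite -leqNgt => HA.
have key : forall a, a \in A ->
    (#|nbh e a :&: nbh e v :&: Rset e t nab| <= b * t)%N.
  move=> a aA; rewrite leqNgt; apply/negP => Hbig.
  have av : a != v by apply: contraNneq vA => <-.
  have aB : a \in Bv e t nab v.
    rewrite inE av /= addn1; apply: (leq_trans Hbig); apply: subset_leq_card.
    apply/subsetP => y; rewrite !in_setI => /andP[/andP[Hay Hvy] Hy].
    by rewrite Hay Hvy (RR1 y Hy).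
  have aD2 : a \in D2 e t nab.
    apply/bigcupP; exists v; last by rewrite inE aB orbT.
    by rewrite inE; apply/set0Pn; exists a.
  have : (0 < #|nbh e a :&: nbh e v :&: Rset e t nab|)%N.
    by apply: leq_trans Hbig.
  case/card_gt0P => y; rewrite !in_setI => /andP[/andP[Hay _] Hy].
  rewrite inE in Hay.
  by move: (inR a y); rewrite inE aD2 orbT Hay Hy => /(_ erefl erefl).
have cov : nbh e v :&: Rset e t nab \subset
    \bigcup_(a in A) (a |: (nbh e a :&: nbh e v :&: Rset e t nab)).
  apply/subsetP => y; rewrite inE => /andP[Hvy Hy].
  move/subsetP: sub => /(_ y Hvy); rewrite inE => /existsP[a /andP[aA Ha]].
  apply/bigcupP; exists a => //.
  case/orP: Ha => [/eqP->|Hay]; first by rewrite setU11.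
  by rewrite in_setU1 !in_setI (_ : y \in nbh e a) ?Hvy ?Hy ?orbT // inE.
apply: (leq_trans (subset_leq_card cov)).
apply: (leq_trans (card_bigcup_le _ _ _)).
apply: (@leq_trans (\sum_(a in A) (b * t + 1))).
  apply: leq_sum => a aA; rewrite cardsU1 addnC leq_add ?key //; by case: (_ \notin _).
rewrite sum_nat_const; apply: (leq_trans (leq_mul HA (leqnn _))).
by rewrite mulnDr muln1 mulnA -mulnn.
Qed.
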